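(* Let $s\in\mathbb{N}$, $\bm{n}=(n_1,\dots,n_d)\in\mathbb{Z}^d$ with $\|\bm{n}\|_1\le s$, and $c_{\bm n}\in\mathbb{C}$ such that $|c_{\bm n}e^{i\bm n\cdot\bm x}|\le 1$ for all $\bm{x}\in\mathbb{R}^d$, where $e^{i\bm n\cdot\bm x}=e^{in_1x_1}\cdots e^{in_dx_d}$. Then there exists a PQC $U^{\bm n}(\bm{x})$ such that $$\langle 0|^{\otimes d}U^{\bm n}(\bm x)|0\rangle^{\otimes d}=c_{\bm n}e^{i\bm n\cdot\bm x}$$ for all $\bm x\in\mathbb{R}^d$. The width of the PQC is at most $d$, the depth is at most $6s+3$, and the number of parameters is at most $4s+3d$.
   Context: Here a PQC with input $\bm x\in\mathbb{R}^d$ is a quantum circuit built from single-qubit gates (and CNOTs), the single-qubit gates being Pauli rotations $R_Y(\theta)=\begin{pmatrix}\cos\frac\theta2&-\sin\frac\theta2\\ \sin\frac\theta2&\cos\frac\theta2\end{pmatrix}$, $R_Z(\theta)=\mathrm{diag}(e^{-i\theta/2},e^{i\theta/2})$ with trainable real angles not depending on $\bm x$, or data-encoding gates $R_Z(x_j)$ applied with a coordinate $x_j\in\mathbb{R}$ of the input (Pauli-$Z$ basis encoding). Width = number of qubits, depth = circuit depth, number of parameters = number of trainable angles. *)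

(* Defs.v *)
From HB Require Import structures.
From mathcomp Require Import all_boot all_order all_algebra.
From mathcomp Require Import reals trigo.
From mathcomp Require Import complex.
Set Implicit Arguments. Unset Strict Implicit. Unset Printing Implicit Defensive.
Import Order.TTheory GRing.Theory Num.Theory.
Local Open Scope ring_scope.
Local Open Scope complex_scope.

Section PQC.
Variable R : realType.
Local Notation C := R[i].

Definition expi (t : R) : C := (cos t +i* sin t)%C.

(* A 2x2 matrix, rows/cols indexed by bool (false = |0>, true = |1>). *)
Definition mat2 := bool -> bool -> C.

Definition RYm (th : R) : mat2 := fun a b =>
  match a, b with
  | false, false => (cos (th / 2))%:C
  | false, true  => (- sin (th / 2))%:C
  | true,  false => (sin (th / 2))%:C
  | true,  true  => (cos (th / 2))%:C
  end.

Definition RZm (th : R) : mat2 := fun a b =>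
  match a, b with
  | false, false => expi (- (th / 2))
  | true,  true  => expi (th / 2)
  | _, _ => 0
  end.

Inductive gate (w d : nat) :=
  | GRY of 'I_w & R
  | GRZ of 'I_w & R
  | GEnc of 'I_w & 'I_d      (* data encoding R_Z(x_j) on a qubit *)
  | GCNOT of 'I_w & 'I_w.    (* CNOT (control, target) *)

Definition gate_qubits w d (g : gate w d) : seq 'I_w :=
  match g with
  | GRY q _ | GRZ q _ | GEnc q _ => [:: q]
  | GCNOT c t => [:: c; t]
  end.

Definition gate_wf w d (g : gate w d) : bool :=
  match g with GCNOT c t => c != t | _ => true end.

Definition gate_nparams w d (g : gate w d) : nat :=
  match g with GRY _ _ | GRZ _ _ => 1%N | _ => 0%N end.

(* A layer: gates acting on pairwise disjoint qubits (one time step).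
   A circuit: a sequence of layers; depth = number of layers. *)
Definition layer w d := seq (gate w d).
Definition circuit w d := seq (layer w d).

Definition layer_wf w d (l : layer w d) : bool :=
  all (@gate_wf w d) l && uniq (flatten (map (@gate_qubits w d) l)).

Definition circuit_wf w d (U : circuit w d) : bool := all (@layer_wf w d) U.

Definition depth w d (U : circuit w d) : nat := size U.

Definition nparams w d (U : circuit w d) : nat :=
  \sum_(l <- U) \sum_(g <- l) gate_nparams g.

(* states of w qubits: amplitudes indexed by computational basis strings *)
Definition state w := {ffun 'I_w -> bool} -> C.

Definition setbit w (b : {ffun 'I_w -> bool}) (q : 'I_w) (v : bool) :
  {ffun 'I_w -> bool} := [ffun k => if k == q then v else b k].

Definition apply1 w (M : mat2) (q : 'I_w) (psi : state w) : state w :=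
  fun b => \sum_(a : bool) M (b q) a * psi (setbit b q a).

Definition apply_cnot w (c t : 'I_w) (psi : state w) : state w :=
  fun b => psi (setbit b t (b t (+) b c)).

Definition apply_gate w d (x : 'I_d -> R) (g : gate w d) (psi : state w)
  : state w :=
  match g with
  | GRY q th => apply1 (RYm th) q psi
  | GRZ q th => apply1 (RZm th) q psi
  | GEnc q j => apply1 (RZm (x j)) q psi
  | GCNOT c t => apply_cnot c t psi
  end.

(* gates in a layer act on disjoint qubits, so their order is irrelevant *)
Definition apply_layer w d (x : 'I_d -> R) (l : layer w d) (psi : state w)
  : state w := foldl (fun s g => apply_gate x g s) psi l.

(* layers are applied first-to-last *)
Definition apply_circuit w d (x : 'I_d -> R) (U : circuit w d) (psi : state w)
  : state w := foldl (fun s l => apply_layer x l s) psi U.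

Definition zero_bits w : {ffun 'I_w -> bool} := [ffun => false].

Definition ket0 w : state w := fun b => if b == @zero_bits w then 1 else 0.

Definition amp0 w d (U : circuit w d) (x : 'I_d -> R) : C :=
  apply_circuit x U (@ket0 w) (@zero_bits w).

End PQC.

(* Main.v *)
Require Import Defs.
From HB Require Import structures.
From mathcomp Require Import all_boot all_order all_algebra.
From mathcomp Require Import reals trigo.
From mathcomp Require Import complex.
From mathcomp Require Import ring lra zify.
From Stdlib Require Import FunctionalExtensionality.
Set Implicit Arguments. Unset Strict Implicit. Unset Printing Implicit Defensive.
Import Order.TTheory GRing.Theory Num.Theory.
Local Open Scope ring_scope.
Local Open Scope complex_scope.


Section Aux.
Variable R : realType.
Local Notation C := R[i].

Definition pstate w (F : 'I_w -> bool -> C) : state R w :=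
  fun b => \prod_k F k (b k).
Definition upd (M : mat2 R) (f : bool -> C) : bool -> C :=
  fun v => \sum_a M v a * f a.

Lemma apply1_pstate w M (q : 'I_w) F :
  apply1 M q (pstate F) =
  pstate (fun k => if k == q then upd M (F q) else F k).
Proof.
apply: functional_extensionality => b; rewrite /apply1 /pstate /upd.
rewrite [RHS](bigD1 q) //= (eqxx q) big_distrl /=; apply: eq_bigr => a _.
rewrite (bigD1 q) //= /setbit ffunE (eqxx q) -mulrA; congr (_ * (_ * _)).
by apply: eq_bigr => k /negbTE kq; rewrite ffunE kq.
Qed.

Lemma layer_pstate w d x (s : seq 'I_w) (mk : 'I_w -> gate R w d)
  (M : 'I_w -> mat2 R) F :
  uniq s -> (forall j, apply_gate x (mk j) = apply1 (M j) j) ->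
  apply_layer x (map mk s) (pstate F) =
  pstate (fun k => if k \in s then upd (M k) (F k) else F k).
Proof.
move=> us hM; elim: s F us => [|j s IH] F /=.
  by move=> _; congr pstate; apply: functional_extensionality.
case/andP=> js us.
change (apply_layer x (map mk s) (apply_gate x (mk j) (pstate F)) =
  pstate (fun k => if k \in j :: s then upd (M k) (F k) else F k)).
rewrite hM apply1_pstate IH //; congr pstate.
apply: functional_extensionality => k; rewrite in_cons.
case: eqP => [->|_] /=; [by rewrite (negbTE js) | by []].
Qed.

Lemma ket0_pstate w : @ket0 R w = pstate (fun _ v => if v then 0 else 1).
Proof.
apply: functional_extensionality => b; rewrite /ket0 /pstate.
case: eqP => [->|hb].
  by rewrite big1 // => k _; rewrite ffunE.
case: (pickP (fun k => b k)) => [k bk|none].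
  by rewrite (bigD1 k) //= bk mul0r.
by exfalso; apply: hb; apply/ffunP => k; rewrite ffunE; move: (none k) => /= ->.
Qed.

Lemma expiD a b : expi a * expi b = expi (a + b) :> C.
Proof.
rewrite /expi /= cosD sinD; congr (_ +i* _); ring.
Qed.

Lemma expi0 : expi 0 = 1 :> C.
Proof. by rewrite /expi cos0 sin0. Qed.

Lemma expiX a m : expi a ^+ m = expi (m%:R * a) :> C.
Proof.
elim: m => [|m IH]; first by rewrite expr0 mul0r expi0.
by rewrite exprS IH expiD mulrS mulrDl mul1r.
Qed.

Lemma updRZ t f : upd (RZm t) f =
  fun v => (if v then expi (t / 2) else expi (- (t / 2))) * f v.
Proof.
apply: functional_extensionality => v; rewrite /upd big_bool.
by case: v => /=; rewrite ?mul0r ?add0r ?addr0.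
Qed.

Lemma iter_updRZ t m f : iter m (upd (RZm t)) f =
  fun v => (if v then expi (t / 2) else expi (- (t / 2))) ^+ m * f v.
Proof.
elim: m => [|m IH] /=.
  by apply: functional_extensionality => v; rewrite expr0 mul1r.
rewrite IH updRZ; apply: functional_extensionality => v.
by rewrite exprS mulrA.
Qed.

End Aux.

Section Aux2.
Variable R : realType.
Local Notation C := R[i].

Lemma polar (c : C) : `|c| <= 1 -> exists th ph, c = (cos th)%:C * expi ph.
Proof.
case: c => a b; rewrite normc_def lecE /= => /andP [_ hr].
set r := Num.sqrt _ in hr.
have r0 : 0 <= r := sqrtr_ge0 _.
have hr2 : r ^+ 2 = a ^+ 2 + b ^+ 2.
  by rewrite sqr_sqrtr // addr_ge0 // sqr_ge0.
exists (acos r).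
have cr : cos (acos r) = r.
  by rewrite acosK // in_itv /= hr andbT (le_trans _ r0) // lerN10.
rewrite cr.
case: (eqVneq r 0) => [rz|rn0].
  have e : a ^+ 2 + b ^+ 2 == 0 by rewrite -hr2 rz expr0n.
  move: e; rewrite paddr_eq0 ?sqr_ge0 // !sqrf_eq0 => /andP [/eqP ha /eqP hb].
  by exists 0; rewrite rz ha hb expi0 mulr1.
have rp : 0 < r by rewrite lt_neqAle eq_sym rn0 r0.
set u := a / r.
have hur : u * r = a by rewrite /u mulfVK.
have hu2 : u ^+ 2 <= 1.
  by rewrite /u expr_div_n ler_pdivrMr ?exprn_gt0 // mul1r hr2 lerDl sqr_ge0.
have hu : -1 <= u <= 1.
  by rewrite -ler_norml -(@expr_le1 _ 2) // -normrX ger0_norm ?sqr_ge0.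
have cu : cos (acos u) = u by rewrite acosK // in_itv /= hu.
have su : sin (acos u) = `|b| / r.
  rewrite sin_acos //.
  have -> : 1 - u ^+ 2 = (b / r) ^+ 2.
    rewrite /u; apply: (@mulIf _ (r ^+ 2)); first by rewrite expf_neq0.
    by rewrite mulrBl mul1r !expr_div_n !divfK ?expf_neq0 // hr2; ring.
  by rewrite sqrtr_sqr normrM normfV (gtr0_norm rp).
exists (if 0 <= b then acos u else - acos u).
rewrite /expi; case: ifP => hb.
  rewrite cu su ger0_norm //; simpc; congr (_ +i* _); rewrite /u; field; exact: rn0.
rewrite cosN sinN cu su ltr0_norm ?ltNge ?hb //; simpc; congr (_ +i* _); rewrite /u; field; exact: rn0.
Qed.

Lemma Cneg (r : R) : (- r)%:C = - (r%:C) :> C.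
Proof. by apply/eqP; rewrite eq_complex /= oppr0 !eqxx. Qed.

Lemma C0 : (0 : R)%:C = 0 :> C. Proof. by []. Qed.
Lemma C1 : (1 : R)%:C = 1 :> C. Proof. by []. Qed.

Lemma qval (a g b t : R) (N : nat) :
  upd (RYm b) (iter N (upd (RZm t)) (upd (RYm g) (upd (RZm a)
     (fun v => if v then 0 else 1)))) false =
  (cos (b/2))%:C * (expi (-(t/2)))^+N * (cos (g/2))%:C * expi(-(a/2))
  - (sin (b/2))%:C * expi (t/2) ^+N * (sin (g/2))%:C * expi(-(a/2)).
Proof.
rewrite iter_updRZ !updRZ /upd !big_bool /= !Cneg.
ring.
Qed.

Lemma qubit_ok (th ph t : R) (z : int) :
  upd (RYm (if 0 < z then -pi else th*2))
    (iter (2*`|z|) (upd (RZm t))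
      (upd (RYm (if 0 < z then (th+pi/2)*2 else 0))
        (upd (RZm (-(ph*2))) (fun v => if v then 0 else 1)))) false
  = (cos th)%:C * expi ph * expi (z%:~R * t).
Proof.
have h2 : forall y : R, y * 2 / 2 = y by move=> y; rewrite mulfK // pnatr_eq0.
rewrite qval !expiX mulNr opprK h2.
have NP : forall m : nat, (cos (th * 2 / 2))%:C * expi ((2 * m)%:R * - (t / 2)) * (cos (0 / 2))%:C * expi ph - (sin (th * 2 / 2))%:C * expi ((2 * m)%:R * (t / 2)) * (sin (0 / 2))%:C * expi ph = (cos th)%:C * expi ph * expi (-(m%:R) * t).
  move=> m; rewrite h2 mul0r cos0 sin0 C0 C1.
  have -> : (2 * m)%:R * -(t/2) = -(m%:R) * t :> R by rewrite natrM; field.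
  ring.
case: z => m.
  have -> : (Posz m)%:~R = m%:R :> R by [].
  rewrite ltz_nat /=.
  case: (posnP m) => [->|hm] /=.
    by rewrite NP oppr0.
  rewrite h2 cosDpihalf sinDpihalf !mulNr cosN sinN cos_pihalf sin_pihalf.
  rewrite !Cneg C0 C1.
  have -> : (2 * m)%:R * (t/2) = m%:R * t :> R by rewrite natrM; field.
  ring.
rewrite NegzE /= mulrNz NP.
by [].
Qed.

End Aux2.

Section Aux3.
Variable R : realType.
Local Notation C := R[i].

Lemma layer_full w d x (mk : 'I_w -> gate R w d) (M : 'I_w -> mat2 R) F :
  (forall j, apply_gate x (mk j) = apply1 (M j) j) ->
  apply_layer x (map mk (enum 'I_w)) (pstate F) =
  pstate (fun k => upd (M k) (F k)).
Proof.
move=> hM; rewrite (layer_pstate F (enum_uniq _) hM); congr pstate.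
by apply: functional_extensionality => k; rewrite mem_enum.
Qed.

Definition encL d (N : 'I_d -> nat) (t : nat) : layer R d d :=
  map (fun j => @GEnc R d d j j) [seq j <- enum 'I_d | (t < N j)%N].

Lemma enc_pstate d x (N : 'I_d -> nat) m F :
  foldl (fun s l => apply_layer x l s) (pstate F) (mkseq (encL N) m) =
  pstate (fun k => iter (minn m (N k)) (upd (RZm (x k))) (F k)).
Proof.
elim: m => [|m IH].
  by congr pstate; apply: functional_extensionality => k; rewrite min0n.
rewrite mkseqS -cats1 foldl_cat IH.
rewrite [foldl _ _ _]/= /encL.
rewrite (@layer_pstate _ _ _ x _ _ (fun k => RZm (x k))); last by [].
  congr pstate; apply: functional_extensionality => k.
  rewrite mem_filter mem_enum andbT /=.
  case: (ltnP m (N k)) => h.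
    have -> : minn m.+1 (N k) = m.+1 by apply/minn_idPl.
    by [].
  have -> : minn m.+1 (N k) = N k by apply/minn_idPr/leqW.
  by [].
by rewrite filter_uniq // enum_uniq.
Qed.

Lemma layer_wf_map w d (mk : 'I_w -> gate R w d) (s : seq 'I_w) :
  uniq s -> (forall j, gate_qubits (mk j) = [:: j]) ->
  (forall j, gate_wf (mk j)) -> layer_wf (map mk s).
Proof.
move=> us hq hw; rewrite /layer_wf all_map; apply/andP; split.
  by apply/allP => j _; exact: hw.
by rewrite -map_comp (eq_map hq) flatten_seq1.
Qed.

End Aux3.

Local Close Scope complex_scope.

Theorem lemmaS4 (R : realType) (d s : nat) (n : 'I_d -> int) (c : R[i]) :
  (0 < d)%N ->
  (\sum_(j < d) `|n j|%N <= s)%N ->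
  (forall x : 'I_d -> R, `|c * \prod_(j < d) expi ((n j)%:~R * x j)| <= 1) ->
  exists U : circuit R d d,
    [/\ circuit_wf U,
        (forall x : 'I_d -> R,
           amp0 U x = c * \prod_(j < d) expi ((n j)%:~R * x j)),
        (depth U <= 6 * s + 3)%N
      & (nparams U <= 4 * s + 3 * d)%N].
Proof.
move=> hd hs hc.
pose q0 : 'I_d := Ordinal hd.
have c1 : `|c| <= 1.
  have := hc (fun _ => 0); rewrite big1 ?mulr1 // => j _.
  by rewrite mulr0 expi0.
have [th0 [ph0 ec]] := polar c1.
pose th k := if k == q0 then th0 else 0.
pose ph k := if k == q0 then ph0 else 0.
pose al k := -(ph k * 2).
pose ga k := if 0 < n k then (th k + pi/2)*2 else 0.
pose be k := if 0 < n k then -pi else th k * 2.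
pose N k := (2 * `|n k|)%N.
exists [:: map (fun j => @GRZ R d d j (al j)) (enum 'I_d),
           map (fun j => @GRY R d d j (ga j)) (enum 'I_d)
         & rcons (mkseq (encL R N) (2 * s))
                 (map (fun j => @GRY R d d j (be j)) (enum 'I_d))].
split.
- rewrite /circuit_wf /= all_rcons !layer_wf_map ?enum_uniq //=.
  rewrite /mkseq all_map; apply/allP => t _ /=.
  by rewrite /encL; apply: layer_wf_map => //; apply: filter_uniq; apply: enum_uniq.
- move=> x; rewrite /amp0 /apply_circuit /= -cats1 foldl_cat ket0_pstate.
  rewrite (@layer_full _ _ _ x _ (fun j => RZm (al j))) //.
  rewrite (@layer_full _ _ _ x _ (fun j => RYm (ga j))) //.
  rewrite enc_pstate /=.
  rewrite (@layer_full _ _ _ x _ (fun j => RYm (be j))) //.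
  rewrite /pstate.
  have -> : c = \prod_(k < d) (((cos (th k))%:C)%C * expi (ph k)).
    rewrite (bigD1 q0) //= big1 ?mulr1 /th /ph ?eqxx //.
    by move=> k /negbTE ->; rewrite cos0 expi0 mulr1.
  rewrite -big_split /=; apply: eq_bigr => k _.
  rewrite ffunE.
  have hk : (N k <= 2 * s)%N.
    rewrite /N leq_mul2l /=; apply: leq_trans hs.
    by rewrite (bigD1 k) //= leq_addr.
  rewrite (minn_idPr hk).
  exact: qubit_ok.
- by rewrite /depth /= size_rcons size_mkseq; lia.
- have e1 : forall (f : 'I_d -> gate R d d), (forall j, gate_nparams (f j) = 1%N) ->
      (\sum_(g <- map f (enum 'I_d)) gate_nparams g = d)%N.
    move=> f hf; rewrite big_map (eq_bigr (fun _ => 1%N)) ?sum1_size ?size_enum_ord //.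
  rewrite /nparams big_cons big_cons -cats1 big_cat big_seq1 !e1 //.
  have h0 : (\sum_(l <- mkseq (encL R N) (2 * s)) \sum_(g <- l) gate_nparams g = 0)%N.
    rewrite /mkseq big_map big1 // => t _.
    by rewrite /encL big_map big1.
  rewrite /= h0; lia.
Qed.
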